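(* Let $M$ be an $n$-quasi-paving matroid of rank $n$. Then $M$ arises from a tame paving matroid by successive principal extensions along flats of rank $n-2$; that is, there exist a tame paving matroid $M_0$ and matroids $M_1,\ldots,M_r=M$ ($r\ge 0$) such that for each $i\in[r]$, $M_i=M_{i-1}+_{F_i}a_i$ for some flat $F_i$ of $M_{i-1}$ of rank $n-2$ and some new element $a_i$.
   Context: Quasi-paving construction: given a positive integer $n\le d$ and a collection $\mathcal{H}=\{H_1,\ldots,H_k\}$ of subsets of $[d]$ any three of which have empty intersection, the $n$-quasi-paving matroid with representation $\mathcal{H}$ is the matroid on $[d]$ whose circuits are: (Type 1) the $(n-1)$-element subsets contained in the intersection of two distinct members of $\mathcal{H}$; (Type 2) the $n$-element subsets of some $H_i$ containing no Type 1 set; (Type 3) the $(n+1)$-element subsets containing no Type 1 or Type 2 set. An $n$-quasi-paving matroid is one arising in this way (its rank need not be $n$). A paving matroid of rank $n$ is one all of whose circuits have size $n$ or $n+1$; a dependent hyperplane is a maximal set of size at least $n$ all of whose $n$-subsets are circuits; a paving matroid is tame if any three distinct dependent hyperplanes have empty intersection. Principal extension: if $M'$ is a matroid on $E'$, $F$ a flat of $M'$ and $a\notin E'$, then $M'+_F a$ is the matroid on $E'\cup\{a\}$ with bases $\mathcal{B}(M')\cup\{(\lambda\setminus\{b\})\cup\{a\}:\lambda\in\mathcal{B}(M'),\ b\in\lambda\cap F\}$. *)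

(* Defs.v *)
From mathcomp Require Import all_boot.
Set Implicit Arguments. Unset Strict Implicit. Unset Printing Implicit Defensive.

Section Matroids.
Variable T : finType.

Definition is_matroid (E : {set T}) (B : {set {set T}}) : Prop :=
  [/\ B != set0,
      forall b, b \in B -> b \subset E &
      forall b1 b2, b1 \in B -> b2 \in B -> forall x, x \in b1 :\: b2 ->
        exists2 y, y \in b2 :\: b1 & (y |: (b1 :\ x)) \in B].

Definition indep (B : {set {set T}}) (X : {set T}) : bool :=
  [exists b in B, X \subset b].

Definition rank (B : {set {set T}}) (X : {set T}) : nat :=
  \max_(Y in powerset X | indep B Y) #|Y|.

Definition mrank (E : {set T}) (B : {set {set T}}) : nat := rank B E.

Definition circuit (E : {set T}) (B : {set {set T}}) (C : {set T}) : bool :=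
  [&& C \subset E, ~~ indep B C & [forall x in C, indep B (C :\ x)]].

Definition flat (E : {set T}) (B : {set {set T}}) (F : {set T}) : bool :=
  (F \subset E) && [forall x in E :\: F, rank B F < rank B (x |: F)].

Definition paving_of_rank (n : nat) (E : {set T}) (B : {set {set T}}) : Prop :=
  mrank E B = n /\
  forall C, circuit E B C -> #|C| = n \/ #|C| = n.+1.

Definition dh_candidate (n : nat) (E : {set T}) (B : {set {set T}}) (H : {set T}) : bool :=
  [&& H \subset E, n <= #|H| &
      [forall C in powerset H, (#|C| == n) ==> circuit E B C]].

Definition dep_hyperplane (n : nat) (E : {set T}) (B : {set {set T}}) (H : {set T}) : bool :=
  dh_candidate n E B H &&
  [forall H' : {set T}, (H \proper H') ==> ~~ dh_candidate n E B H'].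

Definition tame_paving (E : {set T}) (B : {set {set T}}) : Prop :=
  let n := mrank E B in
  paving_of_rank n E B /\
  forall H1 H2 H3, dep_hyperplane n E B H1 -> dep_hyperplane n E B H2 ->
    dep_hyperplane n E B H3 -> H1 != H2 -> H1 != H3 -> H2 != H3 ->
    H1 :&: H2 :&: H3 = set0.

Definition qp_type1 (n : nat) (Hs : {set {set T}}) (C : {set T}) : bool :=
  (#|C| == n.-1) &&
  [exists H1 in Hs, exists H2 in Hs, (H1 != H2) && (C \subset H1 :&: H2)].

Definition qp_type2 (n : nat) (Hs : {set {set T}}) (C : {set T}) : bool :=
  [&& #|C| == n, [exists H in Hs, C \subset H] &
      ~~ [exists D in powerset C, qp_type1 n Hs D]].

Definition qp_type3 (n : nat) (Hs : {set {set T}}) (C : {set T}) : bool :=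
  (#|C| == n.+1) &&
  ~~ [exists D in powerset C, qp_type1 n Hs D || qp_type2 n Hs D].

Definition quasi_paving (n : nat) (B : {set {set T}}) : Prop :=
  0 < n /\ n <= #|T| /\
  exists Hs : {set {set T}},
    (forall H1 H2 H3, H1 \in Hs -> H2 \in Hs -> H3 \in Hs ->
       H1 != H2 -> H1 != H3 -> H2 != H3 -> H1 :&: H2 :&: H3 = set0) /\
    forall C, circuit [set: T] B C <->
      (qp_type1 n Hs C || qp_type2 n Hs C || qp_type3 n Hs C).

Definition pext_bases (B : {set {set T}}) (F : {set T}) (a : T) : {set {set T}} :=
  B :|: [set a |: (l :\ b) | l in B, b in l :&: F].

End Matroids.

(* Main.v *)
Require Import Defs.
From mathcomp Require Import all_boot zify.
Set Implicit Arguments. Unset Strict Implicit. Unset Printing Implicit Defensive.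

Lemma exsub (T : finType) (A : {set T}) k : k <= #|A| -> exists S : {set T}, S \subset A /\ #|S| = k.
Proof.
elim: k => [|k IH] hk; first by exists set0; rewrite sub0set cards0.
have [S [hS hc]] := IH (ltnW hk).
have : ~~ (A \subset S).
  by apply/negP => /subset_leq_card; lia.
case/subsetPn => x xA xS.
exists (x |: S); split; first by rewrite subUset sub1set xA.
by rewrite cardsU1 xS hc.
Qed.

Lemma cardsD1S (T : finType) (A : {set T}) x : x \in A -> #|A| = (#|A :\ x|).+1.
Proof. by move=> xA; rewrite (cardsD1 x A) xA. Qed.

Ltac plia := repeat match goal with H : _ |- _ => clear H end; lia.
Section QP.
Variable T : finType.
Variable n : nat.
Variable B : {set {set T}}.
Variable Hs : {set {set T}}.
Hypothesis hM : is_matroid [set: T] B.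
Hypothesis hrk : mrank [set: T] B = n.
Hypothesis hn : 0 < n.
Hypothesis h3 : forall H1 H2 H3, H1 \in Hs -> H2 \in Hs -> H3 \in Hs ->
       H1 != H2 -> H1 != H3 -> H2 != H3 -> H1 :&: H2 :&: H3 = set0.
Definition qp (C : {set T}) := qp_type1 n Hs C || qp_type2 n Hs C || qp_type3 n Hs C.
Hypothesis hC : forall C, circuit [set: T] B C <-> qp C.

Lemma indep_subset (X Y : {set T}) : indep B Y -> X \subset Y -> indep B X.
Proof.
case/exists_inP => b hb hYb hXY; apply/exists_inP; exists b => //.
exact: subset_trans hXY hYb.
Qed.

Lemma indep0 : indep B set0.
Proof.
case: hM => /set0Pn [b hb] _ _; apply/exists_inP; exists b => //; exact: sub0set.
Qed.

Lemma dep_circ (Y : {set T}) : ~~ indep B Y -> exists2 C : {set T}, C \subset Y & qp C.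
Proof.
move: {2}#|Y|.+1 (ltnSn #|Y|) => k; elim: k Y => // k IH Y hY hd.
case: (boolP [forall x in Y, indep B (Y :\ x)]) => h.
  by exists Y => //; apply/hC; rewrite /circuit subsetT hd h.
move/forall_inPn: h => [x xY hx].
have hc : #|Y :\ x| < k by move: hY; rewrite (cardsD1S xY).
have [C hC1 hC2] := IH (Y :\ x) hc hx.
by exists C => //; apply: subset_trans hC1 (subsetDl _ _).
Qed.

Lemma circ_dep (C Y : {set T}) : C \subset Y -> qp C -> ~~ indep B Y.
Proof.
move=> hCY /hC /and3P [_ hd _]; apply/negP => hY.
by move/negP: hd; apply; apply: indep_subset hY hCY.
Qed.

Lemma indepP (Y : {set T}) : indep B Y <-> (forall C : {set T}, C \subset Y -> ~~ qp C).
Proof.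
split.
  by move=> hY C hCY; apply/negP => hq; move: (circ_dep hCY hq); rewrite hY.
move=> h; case: (boolP (indep B Y)) => // /dep_circ [C hCY hq].
by move: (h C hCY); rewrite hq.
Qed.

Lemma indep_card (Y : {set T}) : indep B Y -> #|Y| <= n.
Proof.
move=> hY; rewrite -hrk /mrank /rank.
apply: (@leq_bigmax_cond _ (fun Y : {set T} => (Y \in powerset [set: T]) && indep B Y) (fun Y : {set T} => #|Y|)).
by rewrite powersetE subsetT /=; exact: hY.
Qed.

Lemma exists_indep_n : exists Y, indep B Y /\ #|Y| = n.
Proof.
case: (boolP [exists Y : {set T}, indep B Y && (#|Y| == n)]).
  by case/existsP => Y /andP [h1 /eqP h2]; exists Y.
move=> hno; exfalso.
have : rank B [set: T] <= n.-1.
  apply/bigmax_leqP => Y /andP [_ hY].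
  have := indep_card hY.
  case: (boolP (#|Y| == n)) => [/eqP e|ne] _.
    by move: hno; rewrite negb_exists => /forallP /(_ Y); rewrite hY e eqxx.
  by move: ne (indep_card hY); lia.
by rewrite -/(mrank _ _) hrk; lia.
Qed.

Lemma exists_basis_n : exists2 b, b \in B & #|b| = n.
Proof.
have [Y [/exists_inP [b hb hYb] hc]] := exists_indep_n.
exists b => //; apply/eqP; rewrite eqn_leq.
have -> : #|b| <= n by apply: indep_card; apply/exists_inP; exists b.
by rewrite -hc subset_leq_card.
Qed.

Lemma basis_card b : b \in B -> #|b| = n.
Proof.
move=> hb; apply/eqP; rewrite eqn_leq.
have -> /= : #|b| <= n by apply: indep_card; apply/exists_inP; exists b.
have [b1 hb1 hc1] := exists_basis_n.
move: {2}#|b1 :\: b|.+1 (ltnSn #|b1 :\: b|) => k.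
elim: k b1 hb1 hc1 => // k IH b1 hb1 hc1 hk.
case: (boolP (b1 \subset b)) => hs; first by rewrite -hc1 subset_leq_card.
case/subsetPn: hs => x xb1 xb.
case: hM => _ _ hex.
have hx : x \in b1 :\: b by rewrite inE xb xb1.
have [y /setDP [yb yb1] hy] := hex b1 b hb1 hb x hx.
apply: (IH _ hy).
  rewrite cardsU1 in_setD1 (negbTE yb1) andbF /=.
  by move: hc1; rewrite (cardsD1S xb1).
have hsub : (y |: (b1 :\ x)) :\: b \subset (b1 :\: b) :\ x.
  apply/subsetP => z /setDP [] /setU1P [-> | /setD1P [zx zb1]] zb.
    by rewrite yb in zb.
  by rewrite !inE zx zb zb1.
apply: leq_ltn_trans (subset_leq_card hsub) _.
by move: hk; rewrite (cardsD1S hx).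
Qed.

Lemma indep_basis (Y : {set T}) : indep B Y -> #|Y| = n -> Y \in B.
Proof.
rewrite /indep => /exists_inP [b hb hYb] hc.
have e : Y = b.
  apply/eqP; rewrite eqEcard hYb (basis_card hb) hc; exact: leqnn.
by rewrite e.
Qed.

Definition Bsub (E : {set T}) := [set b in B | b \subset E].

Definition hasb (E : {set T}) := exists2 b, b \in B & b \subset E.

Lemma extend (E Y : {set T}) : hasb E -> indep B Y -> Y \subset E ->
  exists2 b, b \in B & (Y \subset b) && (b \subset E).
Proof.
move=> [b' hb' hb'E] /exists_inP [b1 hb1 hYb1] hYE.
move: {2}#|b1 :\: E|.+1 (ltnSn #|b1 :\: E|) => k.
elim: k b1 hb1 hYb1 => // k IH b1 hb1 hYb1 hk.
case: (boolP (b1 \subset E)) => hs; first by exists b1 => //; rewrite hYb1 hs.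
case/subsetPn: hs => x xb1 xE.
have xb' : x \notin b' by apply/negP => /(subsetP hb'E); rewrite (negbTE xE).
case: hM => _ _ hex.
have hx : x \in b1 :\: b' by rewrite inE xb' xb1.
have [y /setDP [yb' yb1] hy] := hex b1 b' hb1 hb' x hx.
apply: (IH _ hy).
  apply/subsetP => z zY; rewrite !inE.
  have -> : z != x by apply/negP => /eqP ezx; move: xE; rewrite -ezx (subsetP hYE z zY).
  by rewrite (subsetP hYb1 z zY) orbT.
have hsub : (y |: (b1 :\ x)) :\: E \subset (b1 :\: E) :\ x.
  apply/subsetP => z /setDP [] /setU1P [-> | /setD1P [zx zb1]] zE.
    by rewrite (subsetP hb'E y yb') in zE.
  by rewrite !inE zx zE zb1.
apply: leq_ltn_trans (subset_leq_card hsub) _.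
have hxx : x \in b1 :\: E by rewrite inE xE xb1.
by move: hk; rewrite (cardsD1S hxx).
Qed.

Lemma Bsub_matroid (E : {set T}) : hasb E -> is_matroid E (Bsub E).
Proof.
move=> [b hb hbE]; case: hM => _ _ hex; split.
- by apply/set0Pn; exists b; rewrite inE hb hbE.
- by move=> b0; rewrite inE => /andP [].
move=> b1 b2; rewrite !inE => /andP [hb1 hb1E] /andP [hb2 hb2E] x hx.
have [y hy hy2] := hex b1 b2 hb1 hb2 x hx.
exists y => //; rewrite inE hy2 /=.
rewrite subUset sub1set (subsetP hb2E) ?(setDP hy).1 //=.
exact: subset_trans (subsetDl _ _) hb1E.
Qed.

Lemma indep_Bsub (E Y : {set T}) : hasb E -> indep (Bsub E) Y = indep B Y && (Y \subset E).
Proof.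
move=> hE; apply/idP/idP.
  case/exists_inP => b; rewrite inE => /andP [hb hbE] hYb.
  rewrite (subset_trans hYb hbE) andbT; apply/exists_inP; exists b => //.
case/andP => hY hYE; have [b hb /andP [hYb hbE]] := extend hE hY hYE.
by apply/exists_inP; exists b => //; rewrite inE hb hbE.
Qed.

Lemma rank_le (E X : {set T}) k :
  (forall Y : {set T}, Y \subset X -> indep (Bsub E) Y -> #|Y| <= k) -> rank (Bsub E) X <= k.
Proof.
move=> h; apply/bigmax_leqP => Y /andP [hY1 hY2]; apply: h => //.
by rewrite powersetE in hY1.
Qed.

Lemma rank_ge (E X Y : {set T}) : Y \subset X -> indep (Bsub E) Y -> #|Y| <= rank (Bsub E) X.
Proof.
move=> hYX hY.
apply: (@leq_bigmax_cond _ (fun Y : {set T} => (Y \in powerset X) && indep (Bsub E) Y) (fun Y : {set T} => #|Y|)).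
by rewrite powersetE hYX /=; exact: hY.
Qed.

Lemma qp_card (C : {set T}) : qp C -> [|| #|C| == n.-1, #|C| == n | #|C| == n.+1].
Proof.
rewrite /qp /qp_type1 /qp_type2 /qp_type3.
by case/orP => [/orP [/andP [-> _]|/and3P [-> _ _]]|/andP [-> _]]; rewrite ?orbT.
Qed.

Lemma qp_small (C : {set T}) : qp C -> #|C| <= n.-1 -> qp_type1 n Hs C.
Proof.
rewrite /qp /qp_type2 /qp_type3.
case/orP => [/orP [//|/and3P [/eqP -> _ _]]|/andP [/eqP -> _]]; move: hn; plia.
Qed.

Lemma type1_of (H1 H2 C : {set T}) : H1 \in Hs -> H2 \in Hs -> H1 != H2 ->
  C \subset H1 :&: H2 -> #|C| = n.-1 -> qp C.
Proof.
move=> h1 h2 hne hs hc; rewrite /qp /qp_type1 hc eqxx /=.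
apply/orP; left; apply/orP; left.
apply/exists_inP; exists H1 => //; apply/exists_inP; exists H2 => //.
by rewrite hne hs.
Qed.

Lemma type1_ofP (C : {set T}) : qp_type1 n Hs C -> qp C.
Proof. by rewrite /qp => ->. Qed.

Lemma lemmaN (H Y : {set T}) : H \in Hs -> Y \subset H -> #|Y| = n -> ~~ indep B Y.
Proof.
move=> hH hYH hc.
case: (boolP [exists D in powerset Y, qp_type1 n Hs D]).
  case/exists_inP => D; rewrite powersetE => hDY hD.
  by apply: (circ_dep hDY); rewrite /qp hD.
move=> hno; apply: (circ_dep (subxx Y)); rewrite /qp /qp_type2 hc eqxx hno.
have -> : [exists H0 in Hs, Y \subset H0] by apply/exists_inP; exists H.
by rewrite orbT.
Qed.

Lemma tri3 (H1 H2 H3 : {set T}) a : H1 \in Hs -> H2 \in Hs -> H3 \in Hs -> H1 != H2 ->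
  a \in H1 -> a \in H2 -> a \in H3 -> (H3 == H1) || (H3 == H2).
Proof.
move=> h1 h2 h3' hne a1 a2 a3.
case: (boolP (H3 == H1)) => //= e1; apply/negPn/negP => e2.
have := h3 h1 h2 h3' hne; rewrite eq_sym e1 eq_sym e2 => /(_ isT isT) /setP /(_ a).
by rewrite !inE a1 a2 a3.
Qed.

Lemma pair_eq (H1 H2 H3 H4 : {set T}) a : H1 \in Hs -> H2 \in Hs -> H3 \in Hs -> H4 \in Hs ->
  H1 != H2 -> H3 != H4 -> a \in H1 :&: H2 -> a \in H3 :&: H4 -> H3 :&: H4 = H1 :&: H2.
Proof.
move=> h1 h2 h3' h4 hne hne' /setIP [a1 a2] /setIP [a3 a4].
have := tri3 h1 h2 h3' hne a1 a2 a3; have := tri3 h1 h2 h4 hne a1 a2 a4.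
case/orP => /eqP e4; case/orP => /eqP e3; subst => //.
- by rewrite eqxx in hne'.
- by rewrite setIC.
- by rewrite eqxx in hne'.
Qed.

Lemma indep_inter (X H1 H2 : {set T}) : indep B X -> H1 \in Hs -> H2 \in Hs -> H1 != H2 ->
  #|X :&: (H1 :&: H2)| < n.-1.
Proof.
move=> hX h1 h2 hne; rewrite ltnNge; apply/negP => hle.
have [S [hS hc]] := exsub hle.
have hq := type1_of h1 h2 hne (subset_trans hS (subsetIr _ _)) hc.
by move: (circ_dep (subset_trans hS (subsetIl _ _)) hq); rewrite hX.
Qed.

Lemma EX (X H1 H2 : {set T}) a y : indep B X -> H1 \in Hs -> H2 \in Hs -> H1 != H2 ->
  a \in X -> a \in H1 :&: H2 -> y \in H1 :&: H2 -> y \notin X -> indep B (y |: (X :\ a)).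
Proof.
move=> hX h1 h2 hne aX aI yI yX.
apply/indepP => C hCs; apply/negP => hq.
case: (boolP (y \in C)) => yC; last first.
  have hCX : C \subset X.
    apply/subsetP => z zC; move: (subsetP hCs z zC); rewrite !inE.
    by case/orP => [/eqP ez|/andP [_ ->]] //; move: yC; rewrite -ez zC.
  by move: (circ_dep hCX hq); rewrite hX.
have ay : a != y by apply/negP => /eqP eay; move: yX; rewrite -eay aX.
have aC : a \notin C.
  apply/negP => /(subsetP hCs); rewrite !inE eqxx (negbTE ay) /=; by [].
have hDX : a |: (C :\ y) \subset X.
  apply/subsetP => z /setU1P [-> //|/setD1P [zy zC]].
  by move: (subsetP hCs z zC) => /setU1P [ezy|/setD1P [_ ->]] //; rewrite ezy eqxx in zy.
have hD := indep_subset hX hDX.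
have hDc : #|a |: (C :\ y)| = #|C|.
  by rewrite cardsU1 in_setD1 (negbTE aC) andbF [in RHS](cardsD1 y C) yC.
move: hq; rewrite /qp /qp_type1 /qp_type2 /qp_type3.
case/orP => [/orP [|]|].
- case/andP => /eqP hc /exists_inP [H3 h3' /exists_inP [H4 h4 /andP [hne' hsub]]].
  have e := pair_eq h1 h2 h3' h4 hne hne' yI (subsetP hsub y yC).
  rewrite e in hsub.
  have hsD : a |: (C :\ y) \subset H1 :&: H2.
    by rewrite subUset sub1set aI (subset_trans (subsetDl _ _) hsub).
  have := circ_dep (subxx _) (type1_of h1 h2 hne hsD (etrans hDc hc)).
  by rewrite hD.
- case/and3P => /eqP hc /exists_inP [H hH hCH] _.
  move/setIP: (yI) => [y1 y2].
  have hk := tri3 h1 h2 hH hne y1 y2 (subsetP hCH y yC).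
  have aH : a \in H by move/setIP: aI => [a1 a2]; case/orP: hk => /eqP ->.
  have hsD : a |: (C :\ y) \subset H.
    by rewrite subUset sub1set aH (subset_trans (subsetDl _ _) hCH).
  by move: (lemmaN hH hsD (etrans hDc hc)); rewrite hD.
- case/andP => /eqP hc _.
  by move: (indep_card hD); rewrite hDc hc ltnn.
Qed.

Lemma FIND (X H1 H2 E0 : {set T}) x : indep B X -> H1 \in Hs -> H2 \in Hs -> H1 != H2 ->
  x \in X -> x \in H1 :&: H2 -> x \notin E0 -> n - 2 <= #|H1 :&: H2 :&: E0| ->
  exists2 y, y \in H1 :&: H2 :&: E0 & y \notin X.
Proof.
move=> hX h1 h2 hne xX xI xE hle.
case: (boolP (H1 :&: H2 :&: E0 \subset X)) => hs; last first.
  by case/subsetPn: hs => y hy1 hy2; exists y.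
have hlt := indep_inter hX h1 h2 hne.
have hsub : H1 :&: H2 :&: E0 \subset (X :&: (H1 :&: H2)) :\ x.
  apply/subsetP => z hz; rewrite !inE (subsetP hs z hz).
  move: hz; rewrite !inE => /andP [/andP [-> ->] zE] /=; rewrite andbT.
  by apply/negP => /eqP ezx; move: xE; rewrite -ezx zE.
have hxI : x \in X :&: (H1 :&: H2) by rewrite inE xX xI.
move: (subset_leq_card hsub) hle hlt; rewrite (cardsD1S hxI).
move: #|_ :\ x| #|H1 :&: H2 :&: E0| => u v; plia.
Qed.

Definition P1 (E : {set T}) := forall C : {set T}, C \subset E -> ~~ qp_type1 n Hs C.
Definition P2 (E : {set T}) := forall a, a \notin E -> 2 <= n /\
  exists H1 H2 : {set T}, [/\ H1 \in Hs, H2 \in Hs, H1 != H2, a \in H1 :&: H2 &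
     n - 2 <= #|H1 :&: H2 :&: E|].

Lemma no_type1_n1 (C : {set T}) : n = 1 -> ~~ qp_type1 n Hs C.
Proof.
move=> n1; apply/negP => h.
have hc : #|C| = 0 by move: h; rewrite /qp_type1 n1 => /andP [/eqP -> _].
move/eqP: hc; rewrite cards_eq0 => /eqP e.
by move: (circ_dep (subxx C) (type1_ofP h)); rewrite e indep0.
Qed.

Lemma E0_exists : exists E0, P1 E0 /\ P2 E0.
Proof.
suff: forall k (E : {set T}), #|E| < k -> P2 E -> exists E0, P1 E0 /\ P2 E0.
  move=> h; apply: (h #|[set: T]|.+1 [set: T]) => //.
  by move=> a; rewrite inE.
elim=> // k IH E hk hP2.
case: (boolP [forall C : {set T}, (C \subset E) ==> ~~ qp_type1 n Hs C]) => hP1.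
  exists E; split => // C hCE; move/forallP: hP1 => /(_ C); by rewrite hCE.
move: hP1; rewrite negb_forall => /existsP [C]; rewrite negb_imply negbK => /andP [hCE hC1].
have n2 : 2 <= n.
  case: (ltnP 1 n) => // hn1.
  have n1 : n = 1 by apply/eqP; rewrite eqn_leq hn1 hn.
  by move: (no_type1_n1 C n1); rewrite hC1.
move: (hC1); rewrite /qp_type1 => /andP [/eqP hcC /exists_inP [H1 h1 /exists_inP [H2 h2 /andP [hne hsub]]]].
have : 0 < #|C| by rewrite hcC; move: n2; plia.
rewrite card_gt0 => /set0Pn [a aC].
have aE : a \in E := subsetP hCE a aC.
have hcard : #|C :\ a| = n - 2 by move: hcC; rewrite (cardsD1S aC); plia.
apply: (IH (E :\ a)); first by move: hk; rewrite (cardsD1S aE).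
move=> x xE'; split => //.
case: (x =P a) => [->|xa].
  exists H1, H2; split => //; first exact: subsetP hsub a aC.
  rewrite -hcard; apply: subset_leq_card; apply/subsetP => z; rewrite !inE.
  move=> /andP [za zC]; rewrite za (subsetP hCE z zC) andbT.
  by move: (subsetP hsub z zC); rewrite !inE => /andP [-> ->].
have xE : x \notin E by move: xE'; rewrite !inE; move/eqP: xa => ->.
have [_ [H3 [H4 [h3' h4 hne' xI hle]]]] := hP2 x xE.
exists H3, H4; split => //.
case: (boolP (a \in H3 :&: H4)) => aI.
  have e := pair_eq h1 h2 h3' h4 hne hne' (subsetP hsub a aC) aI.
  rewrite e -hcard; apply: subset_leq_card; apply/subsetP => z; rewrite !inE.
  move=> /andP [za zC]; rewrite za (subsetP hCE z zC) andbT.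
  by move: (subsetP hsub z zC); rewrite !inE => /andP [-> ->].
apply: (leq_trans hle); apply: subset_leq_card; apply/subsetP => z; rewrite !inE.
case/andP => /andP [z3 z4] zE; rewrite z3 z4 zE !andbT /=.
by apply/negP => /eqP eza; move: aI; rewrite -eza inE z3 z4.
Qed.

Lemma hasb_E0 (E0 : {set T}) : P2 E0 -> hasb E0.
Proof.
move=> hP2; case: hM => /set0Pn [b0 hb0] _ hex.
move: {2}#|b0 :\: E0|.+1 (ltnSn #|b0 :\: E0|) => k.
elim: k b0 hb0 => // k IH b hb hk.
case: (boolP (b \subset E0)) => hs; first by exists b.
case/subsetPn: hs => x xb xE.
have [_ [H1 [H2 [h1 h2 hne xI hle]]]] := hP2 x xE.
have hbi : indep B b by apply/exists_inP; exists b.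
have [y yI yb] := FIND hbi h1 h2 hne xb xI xE hle.
move: (yI); rewrite inE => /andP [yI' yE].
have hb' : y |: (b :\ x) \in B.
  apply: indep_basis; first exact: EX hbi h1 h2 hne xb xI yI' yb.
  rewrite cardsU1 in_setD1 (negbTE yb) andbF /=.
  by rewrite -(basis_card hb) (cardsD1S xb).
apply: (IH _ hb').
have hsub : (y |: (b :\ x)) :\: E0 \subset (b :\: E0) :\ x.
  apply/subsetP => z /setDP [] /setU1P [-> | /setD1P [zx zb]] zE.
    by rewrite yE in zE.
  by rewrite !inE zx zE zb.
apply: leq_ltn_trans (subset_leq_card hsub) _.
have hxx : x \in b :\: E0 by rewrite inE xE xb.
by move: hk; rewrite (cardsD1S hxx).
Qed.

Lemma type1_mk (H1 H2 C : {set T}) : H1 \in Hs -> H2 \in Hs -> H1 != H2 ->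
  C \subset H1 :&: H2 -> #|C| = n.-1 -> qp_type1 n Hs C.
Proof.
move=> h1 h2 hne hs hc; rewrite /qp_type1 hc eqxx /=.
apply/exists_inP; exists H1 => //; apply/exists_inP; exists H2 => //.
by rewrite hne hs.
Qed.

Lemma circ_sub (E C : {set T}) : hasb E -> circuit E (Bsub E) C <-> (C \subset E /\ qp C).
Proof.
move=> hE; rewrite /circuit; split.
  case/and3P => hCE hd hall; split => //; apply/hC.
  rewrite /circuit subsetT /=.
  rewrite indep_Bsub // hCE andbT in hd; rewrite hd /=.
  apply/forall_inP => x xC; move/forall_inP: hall => /(_ x xC).
  by rewrite indep_Bsub // => /andP [].
case=> hCE /hC /and3P [_ hd hall]; rewrite hCE indep_Bsub // hCE andbT hd /=.
apply/forall_inP => x xC; rewrite indep_Bsub //.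
move/forall_inP: hall => /(_ x xC) -> /=.
exact: subset_trans (subsetDl _ _) hCE.
Qed.

Lemma mrank_sub (E : {set T}) : hasb E -> mrank E (Bsub E) = n.
Proof.
move=> hE; apply/eqP; rewrite eqn_leq; apply/andP; split.
  apply: rank_le => Y _; rewrite indep_Bsub // => /andP [hY _]; exact: indep_card.
case: (hE) => b hb hbE; rewrite -(basis_card hb); apply: rank_ge => //.
by rewrite indep_Bsub // hbE andbT; apply/exists_inP; exists b.
Qed.

Section E0.
Variable E0 : {set T}.
Hypothesis hP1 : P1 E0.
Hypothesis hP2 : P2 E0.

Let hE0 := hasb_E0 hP2.

Lemma typ2H (S : {set T}) : circuit E0 (Bsub E0) S -> #|S| = n -> exists2 H, H \in Hs & S \subset H.
Proof.
move=> /(circ_sub _ hE0) [hSE hq] hc.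
move: hq; rewrite /qp (negbTE (hP1 hSE)) /= /qp_type2 /qp_type3 hc.
case/orP => [/and3P [_ /exists_inP [H hH hSH] _]|/andP [/eqP]]; last by plia.
by exists H.
Qed.

Lemma dh_sub (D : {set T}) : dh_candidate n E0 (Bsub E0) D -> exists2 H, H \in Hs & D \subset H.
Proof.
case/and3P => hDE hnD /forall_inP hall.
have circ_of : forall S : {set T}, S \subset D -> #|S| = n -> circuit E0 (Bsub E0) S.
  by move=> S hSD hc; move: (hall S); rewrite powersetE hSD hc eqxx => /(_ isT).
have [S [hSD hSc]] := exsub hnD.
have [H hH hSH] := typ2H (circ_of S hSD hSc) hSc.
exists H => //; apply/subsetP => z zD.
case: (boolP (z \in S)) => zS; first exact: subsetP hSH z zS.
have : 0 < #|S| by rewrite hSc.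
rewrite card_gt0 => /set0Pn [s sS].
have hS'D : z |: (S :\ s) \subset D.
  by rewrite subUset sub1set zD (subset_trans (subsetDl _ _) hSD).
have hS'c : #|z |: (S :\ s)| = n.
  rewrite cardsU1 in_setD1 (negbTE zS) andbF /=.
  by rewrite -hSc (cardsD1S sS).
have [H' hH' hS'H'] := typ2H (circ_of _ hS'D hS'c) hS'c.
case: (H' =P H) => [<-|ne]; first by apply: (subsetP hS'H'); rewrite setU11.
exfalso.
have hsub : S :\ s \subset H :&: H'.
  rewrite subsetI (subset_trans (subsetDl _ _) hSH) /=.
  by apply: subset_trans hS'H'; apply: subsetUr.
have hc1 : #|S :\ s| = n.-1 by move: hSc; rewrite (cardsD1S sS) => <-.
have hne : H != H' by apply/eqP => e; apply: ne; rewrite e.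
have hSE : S :\ s \subset E0 by apply: subset_trans (subset_trans hSD hDE); exact: subsetDl.
by move: (hP1 hSE); rewrite (type1_mk hH hH' hne hsub hc1).
Qed.

Lemma cand_HE (H : {set T}) : H \in Hs -> n <= #|H :&: E0| -> dh_candidate n E0 (Bsub E0) (H :&: E0).
Proof.
move=> hH hle; rewrite /dh_candidate subsetIr hle /=.
apply/forall_inP => C; rewrite powersetE => hCs; apply/implyP => /eqP hc.
have hCE : C \subset E0 := subset_trans hCs (subsetIr _ _).
apply/(circ_sub _ hE0); split => //.
rewrite /qp /qp_type2 hc eqxx /=.
have -> : [exists H0 in Hs, C \subset H0].
  by apply/exists_inP; exists H => //; apply: subset_trans hCs (subsetIl _ _).
have -> // : ~~ [exists D in powerset C, qp_type1 n Hs D].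
  apply/negP => /exists_inP [D]; rewrite powersetE => hDC.
  by rewrite (negbTE (hP1 (subset_trans hDC hCE))).
by rewrite orbT.
Qed.

Lemma dh_form (D : {set T}) : dep_hyperplane n E0 (Bsub E0) D -> exists2 H, H \in Hs & D = H :&: E0.
Proof.
case/andP => hD /forallP hmax.
have [H hH hDH] := dh_sub hD.
exists H => //.
move: (hD) => /and3P [hDE hnD _].
have hsub : D \subset H :&: E0 by rewrite subsetI hDH hDE.
case: (eqVproper hsub) => // hpr.
have := hmax (H :&: E0); rewrite hpr /= cand_HE //.
exact: leq_trans hnD (subset_leq_card hsub).
Qed.

Lemma tame_E0 : tame_paving E0 (Bsub E0).
Proof.
rewrite /tame_paving mrank_sub //; split.
  split; first exact: mrank_sub.
  move=> C /(circ_sub _ hE0) [hCE hq].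
  move: hq; rewrite /qp (negbTE (hP1 hCE)) /= /qp_type2 /qp_type3.
  by case/orP => [/and3P [/eqP -> _ _]|/andP [/eqP -> _]]; [left|right].
move=> D1 D2 D3 hd1 hd2 hd3 ne12 ne13 ne23.
have [H1 h1 e1] := dh_form hd1.
have [H2 h2 e2] := dh_form hd2.
have [H3 h3' e3] := dh_form hd3.
have n12 : H1 != H2 by apply/negP => /eqP e; move: ne12; rewrite e1 e2 e eqxx.
have n13 : H1 != H3 by apply/negP => /eqP e; move: ne13; rewrite e1 e3 e eqxx.
have n23 : H2 != H3 by apply/negP => /eqP e; move: ne23; rewrite e2 e3 e eqxx.
have := h3 h1 h2 h3' n12 n13 n23.
move=> e; apply/eqP; rewrite -subset0 -e e1 e2 e3.
apply/subsetP => z; rewrite !inE.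
by case/andP => /andP [/andP [-> _] /andP [-> _]] /andP [-> _].
Qed.

End E0.

Definition Lset := [set x | [exists H1 in Hs, exists H2 in Hs, (H1 != H2) && (x \in H1 :&: H2)]].
Definition Gset a := [set x | [exists H1 in Hs, exists H2 in Hs,
   [&& H1 != H2, a \in H1 :&: H2 & x \in H1 :&: H2]]].
Definition Gp a := if n == 2 then Lset else Gset a.

Lemma Gset_eq (H1 H2 : {set T}) a : H1 \in Hs -> H2 \in Hs -> H1 != H2 -> a \in H1 :&: H2 ->
  Gset a = H1 :&: H2.
Proof.
move=> h1 h2 hne aI; apply/setP => x; rewrite [in LHS]inE; apply/idP/idP.
  case/exists_inP => H3 h3' /exists_inP [H4 h4 /and3P [ne' aI' xI']].
  by rewrite -(pair_eq h1 h2 h3' h4 hne ne' aI aI').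
move=> xI; apply/exists_inP; exists H1 => //; apply/exists_inP; exists H2 => //.
by rewrite hne aI xI.
Qed.

Lemma inL (H1 H2 : {set T}) x : H1 \in Hs -> H2 \in Hs -> H1 != H2 -> x \in H1 :&: H2 -> x \in Lset.
Proof.
move=> h1 h2 hne xI; rewrite inE; apply/exists_inP; exists H1 => //.
by apply/exists_inP; exists H2 => //; rewrite hne xI.
Qed.

Lemma loop_dep (X : {set T}) x : n = 2 -> x \in Lset -> x \in X -> ~~ indep B X.
Proof.
move=> n2; rewrite inE => /exists_inP [H1 h1 /exists_inP [H2 h2 /andP [hne xI]]] xX.
apply/negP => hX; move: (indep_inter hX h1 h2 hne); rewrite n2 ltnS leqn0 cards_eq0.
by move/eqP/setP/(_ x); rewrite !inE xX; move: xI; rewrite inE => ->.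
Qed.

Lemma hasb_mono (E E' : {set T}) : E \subset E' -> hasb E -> hasb E'.
Proof. by move=> hs [b hb hbE]; exists b => //; apply: subset_trans hbE hs. Qed.

Section Step.
Variable E0 : {set T}.
Hypothesis hP2 : P2 E0.
Variable E' : {set T}.
Variable a : T.
Hypothesis hE0E : E0 \subset E'.
Hypothesis haE : a \notin E'.

Let F := E' :&: Gp a.
Let hE' : hasb E' := hasb_mono hE0E (hasb_E0 hP2).
Let haE0 : a \notin E0.
Proof. apply/negP => h; move: (subsetP hE0E a h); by rewrite (negbTE haE). Qed.

Lemma step_data : 2 <= n /\ exists H1 H2 : {set T}, [/\ H1 \in Hs, H2 \in Hs, H1 != H2,
  a \in H1 :&: H2 & (n - 2 <= #|H1 :&: H2 :&: E0|) /\ (H1 :&: H2 \subset Gp a)].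
Proof.
have [n2 [H1 [H2 [h1 h2 hne aI hle]]]] := hP2 haE0.
split => //; exists H1, H2; split => //; split => //.
rewrite /Gp; case: (n == 2).
  by apply/subsetP => x xI; apply: inL h1 h2 hne xI.
by rewrite (Gset_eq h1 h2 hne aI).
Qed.

Lemma S1 (Y : {set T}) : Y \subset F -> indep B Y -> #|Y| <= n - 2.
Proof.
move=> hYF hY.
have [n2 [H1 [H2 [h1 h2 hne aI [hle hG]]]]] := step_data.
move: hYF; rewrite /F /Gp; case: eqP => [e2|ne2] hYF.
  rewrite e2 /= leqn0 cards_eq0; apply/negPn/negP => /set0Pn [y yY].
  move: (subsetP hYF y yY); rewrite inE => /andP [_ yL].
  by move: (loop_dep e2 yL yY); rewrite hY.
rewrite (Gset_eq h1 h2 hne aI) in hYF.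
have := indep_inter hY h1 h2 hne.
have -> : Y :&: (H1 :&: H2) = Y by apply/setIidPl; apply: subset_trans hYF (subsetIr _ _).
move: #|Y| => u; plia.
Qed.

Lemma S2 : exists K : {set T}, [/\ K \subset F, #|K| = n - 2, indep B K &
  forall x, x \in E' -> x \notin F -> indep B (x |: K)].
Proof.
have [n2 [H1 [H2 [h1 h2 hne aI [hle hG]]]]] := step_data.
have [K [hK hKc]] := exsub hle.
have hKF : K \subset F.
  rewrite /F subsetI (subset_trans hK (subset_trans (subsetIr _ _) hE0E)) /=.
  exact: subset_trans hK (subset_trans (subsetIl _ _) hG).
exists K; split => //.
  apply/indepP => C hCK; apply/negP => hq.
  move: (qp_card hq) (subset_leq_card hCK); rewrite hKc.
  move: n2; move: #|C| => u; plia.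
move=> x xE xF; apply/indepP => C hCs; apply/negP => hq.
have xK : x \notin K by apply/negP => /(subsetP hKF); rewrite (negbTE xF).
have hcx : #|x |: K| = n.-1 by rewrite cardsU1 xK hKc; move: n2; plia.
have h1C := qp_small hq (leq_trans (subset_leq_card hCs) (eq_leq hcx)).
move: (h1C); rewrite /qp_type1 => /andP [/eqP hcC /exists_inP [H3 h3' /exists_inP [H4 h4 /andP [hne' hsub]]]].
have eC : C = x |: K by apply/eqP; rewrite eqEcard hCs hcx hcC leqnn.
have xI' : x \in H3 :&: H4 by apply: (subsetP hsub); rewrite eC setU11.
move: xF; rewrite /F inE xE /= /Gp; case: eqP => [e2|ne2].
  by rewrite (inL h3' h4 hne' xI').
have : 0 < #|K| by rewrite hKc; move: n2 ne2; plia.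
rewrite card_gt0 => /set0Pn [k kK].
have kI : k \in H1 :&: H2 by apply: (subsetP (subset_trans hK (subsetIl _ _))).
have kI' : k \in H3 :&: H4 by apply: (subsetP hsub); rewrite eC setU1r.
have e := pair_eq h1 h2 h3' h4 hne hne' kI kI'.
by rewrite (Gset_eq h1 h2 hne aI) -e xI'.
Qed.

Lemma step_matroid : is_matroid (a |: E') (Bsub (a |: E')).
Proof. apply: Bsub_matroid; apply: hasb_mono hE'; exact: subsetUr. Qed.

Lemma rank_F_le : rank (Bsub E') F <= n - 2.
Proof.
apply: rank_le => Y hYF; rewrite indep_Bsub // => /andP [hY _]; exact: S1.
Qed.

Lemma step_flat : flat E' (Bsub E') F.
Proof.
have [n2 _] := step_data.
have [K [hKF hKc hK hx]] := S2.
rewrite /flat subsetIl /=; apply/forall_inP => x; rewrite inE => /andP [xF xE].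
apply: (leq_ltn_trans rank_F_le).
have xK : x \notin K by apply/negP => /(subsetP hKF); rewrite (negbTE xF).
have : #|x |: K| <= rank (Bsub E') (x |: F).
  apply: rank_ge; first by apply: setUS.
  rewrite indep_Bsub // hx //= subUset sub1set xE /=.
  exact: subset_trans hKF (subsetIl _ _).
rewrite cardsU1 xK hKc; move: n2; move: (rank _ _) => u; plia.
Qed.

Lemma step_rank : (rank (Bsub E') F).+2 = n.
Proof.
have [n2 _] := step_data.
have [K [hKF hKc hK hx]] := S2.
have : #|K| <= rank (Bsub E') F.
  apply: rank_ge => //; rewrite indep_Bsub // hK /=.
  exact: subset_trans hKF (subsetIl _ _).
move: rank_F_le; rewrite hKc; move: n2; move: (rank _ _) => u; plia.
Qed.

Lemma step_pext : Bsub (a |: E') = pext_bases (Bsub E') F a.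
Proof.
have [n2 [H1 [H2 [h1 h2 hne aI [hle hG]]]]] := step_data.
apply/setP => X; rewrite /pext_bases; apply/idP/idP.
  rewrite inE => /andP [hX hXE].
  have hXi : indep B X by apply/exists_inP; exists X.
  case: (boolP (a \in X)) => aX; last first.
    rewrite inE; apply/orP; left; rewrite inE hX /=.
    apply/subsetP => z zX; case/setU1P: (subsetP hXE z zX) => // eza.
    by move: aX; rewrite -eza zX.
  case: (n =P 2) => [e2|ne2].
    by move: (loop_dep e2 (inL h1 h2 hne aI) aX); rewrite hXi.
  have [y yI yX] := FIND hXi h1 h2 hne aX aI haE0 hle.
  move: (yI); rewrite inE => /andP [yI' yE0].
  have hl : indep B (y |: (X :\ a)) := EX hXi h1 h2 hne aX aI yI' yX.
  have hlc : #|y |: (X :\ a)| = n.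
    rewrite cardsU1 in_setD1 (negbTE yX) andbF /=.
    by rewrite -(basis_card hX) (cardsD1S aX).
  have hlB := indep_basis hl hlc.
  rewrite inE; apply/orP; right; apply/imset2P.
  exists (y |: (X :\ a)) y.
  - rewrite inE hlB /= subUset sub1set (subsetP hE0E y yE0) /=.
    apply/subsetP => z; rewrite inE => /andP [za zX].
    by move: (subsetP hXE z zX); rewrite inE (negbTE za).
  - by rewrite inE setU11 /F inE (subsetP hE0E y yE0) (subsetP hG y yI').
  - apply/setP => z; rewrite !inE.
    case: (z =P a) => [->|za] //=.
    case: (z =P y) => [->|/eqP zy]; first by rewrite (negbTE yX).
    by [].
rewrite inE => /orP [|].
  rewrite !inE => /andP [hX hXE]; rewrite hX /=.
  exact: subset_trans hXE (subsetUr _ _).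
case/imset2P => l b; rewrite inE => /andP [hl hlE] /setIP [bl bF] ->.
have hli : indep B l by apply/exists_inP; exists l.
move: bF; rewrite /F inE => /andP [bE]; rewrite /Gp; case: (n =P 2) => [e2|ne2] bG.
  by move: (loop_dep e2 bG bl); rewrite hli.
rewrite (Gset_eq h1 h2 hne aI) in bG.
have al : a \notin l by apply/negP => /(subsetP hlE); rewrite (negbTE haE).
have hX := EX hli h1 h2 hne bl bG aI al.
rewrite inE indep_basis //=.
  rewrite subUset sub1set setU11 /=.
  apply: subset_trans (subsetDl _ _) _; exact: subset_trans hlE (subsetUr _ _).
rewrite cardsU1 in_setD1 (negbTE al) andbF /=.
by rewrite -(basis_card hl) (cardsD1S bl).
Qed.

End Step.

Lemma main_sec : exists (r : nat) (E : nat -> {set T}) (Bs : nat -> {set {set T}})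
         (F : nat -> {set T}) (a : nat -> T),
    [/\ is_matroid (E 0) (Bs 0),
        tame_paving (E 0) (Bs 0),
        (forall i, 0 < i <= r ->
           [/\ is_matroid (E i) (Bs i),
               a i \notin E i.-1 /\
               E i = a i |: E i.-1,
               flat (E i.-1) (Bs i.-1) (F i),
               (rank (Bs i.-1) (F i)).+2 = n &
               Bs i = pext_bases (Bs i.-1) (F i) (a i)]),
        E r = [set: T] &
        Bs r = B].
Proof.
have [E0 [hP1 hP2]] := E0_exists.
have hE0 := hasb_E0 hP2.
have [x0 _] : exists x0 : T, true.
  case: hE0 => b hb _; have : 0 < #|b| by rewrite (basis_card hb).
  by case/card_gt0P => x _; exists x.
pose s := enum (~: E0).
pose Ef i := E0 :|: [set x in take i s].
exists (size s), Ef, (fun i => Bsub (Ef i)), (fun i => Ef i.-1 :&: Gp (nth x0 s i.-1)),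
  (fun i => nth x0 s i.-1).
have hEf0 : Ef 0 = E0 by rewrite /Ef take0; apply/setP => z; rewrite !inE orbF.
have hsub : forall j, E0 \subset Ef j by move=> j; exact: subsetUl.
have hsz : Ef (size s) = [set: T].
  rewrite /Ef take_size; apply/setP => z; rewrite !inE mem_enum inE.
  by case: (z \in E0).
split.
- rewrite hEf0; exact: Bsub_matroid hE0.
- rewrite hEf0; exact: tame_E0 hP1 hP2.
- move=> i /andP [i0 ir].
  have hj : i.-1 < size s by move: i0 ir; plia.
  have etk : take i s = rcons (take i.-1 s) (nth x0 s i.-1).
    by rewrite -(take_nth x0 hj) (prednK i0).
  have eEi : Ef i = nth x0 s i.-1 |: Ef i.-1.
    rewrite /Ef etk; apply/setP => z; rewrite !inE mem_rcons in_cons.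
    by rewrite orbCA.
  have han : nth x0 s i.-1 \notin Ef i.-1.
    rewrite /Ef inE negb_or.
    have hin : nth x0 s i.-1 \in s := mem_nth x0 hj.
    rewrite mem_enum inE in hin; rewrite hin /= inE.
    have := take_uniq i (enum_uniq (pred_of_set (~: E0))).
    by rewrite etk rcons_uniq => /andP [].
  cbv beta; rewrite eEi; split.
  + exact: (@step_matroid E0 hP2 (Ef i.-1) (nth x0 s i.-1) (hsub i.-1)).
  + by split.
  + exact: (@step_flat E0 hP2 (Ef i.-1) (nth x0 s i.-1) (hsub i.-1) han).
  + exact: (@step_rank E0 hP2 (Ef i.-1) (nth x0 s i.-1) (hsub i.-1) han).
  + exact: (@step_pext E0 hP2 (Ef i.-1) (nth x0 s i.-1) (hsub i.-1) han).
- exact: hsz.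
- rewrite hsz; apply/setP => b; rewrite inE subsetT andbT //.
Qed.

End QP.

Unset Implicit Arguments.

Theorem proposition3p7 (T : finType) (n : nat) (B : {set {set T}}) :
  is_matroid [set: T] B ->
  quasi_paving n B ->
  mrank [set: T] B = n ->
  exists (r : nat) (E : nat -> {set T}) (Bs : nat -> {set {set T}})
         (F : nat -> {set T}) (a : nat -> T),
    [/\ is_matroid (E 0) (Bs 0),
        tame_paving (E 0) (Bs 0),
        (forall i, 0 < i <= r ->
           [/\ is_matroid (E i) (Bs i),
               a i \notin E i.-1 /\
               E i = a i |: E i.-1,
               flat (E i.-1) (Bs i.-1) (F i),
               (rank (Bs i.-1) (F i)).+2 = n &
               Bs i = pext_bases (Bs i.-1) (F i) (a i)]),
        E r = [set: T] &
        Bs r = B].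
Proof.
move=> hM [hn [_ [Hs [h3 hC]]]] hrk.
exact: (@main_sec T n B Hs hM hrk hn h3 hC).
Qed.
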